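(* Let $\mathcal{P}$ be a locally geometric poset and $\mathcal{Q}$ a TM-ideal of $\mathcal{P}$ with $\operatorname{rk}(\mathcal{Q})=\operatorname{rk}(\mathcal{P})-1$. Then for every $a\in A(\mathcal{P})\setminus A(\mathcal{Q})$ there is a poset isomorphism $\mathcal{Q}\cong\mathcal{P}_{\ge a}$.
   Context: All posets are finite, have a unique minimal element $\hat0$ and are ranked; $\operatorname{rk}$ of a poset is the maximum rank of its elements. $A(\cdot)$ denotes the set of atoms (rank-1 elements). $\bigvee T$ is the set of minimal upper bounds of $T$, $x\vee y=\bigvee\{x,y\}$, $x\wedge y$ the meet. A lattice is geometric if $y$ covers $x$ iff there is an atom $a\not\le x$ with $y=x\vee a$; $\mathcal{P}$ is locally geometric if each $\mathcal{P}_{\le x}$ is a geometric lattice. An element $x$ of a geometric lattice $L$ is modular if $x\wedge(y\vee z)=(x\wedge y)\vee z$ for all $z\le x$, $y\in L$. An order ideal $\mathcal{Q}$ is pure if all its maximal elements have the same rank and join-closed if $T\subseteq\mathcal{Q}$ implies $\bigvee T\subseteq\mathcal{Q}$. A TM-ideal of $\mathcal{P}$ is a pure, join-closed order ideal $\mathcal{Q}$ such that (1* ) $|a\vee y|=1$ for all $y\in\mathcal{Q}$ and $a\in A(\mathcal{P})\setminus A(\mathcal{Q})$, and (2) for every maximal $x\in\mathcal{P}$ there is a maximal $y\in\mathcal{Q}$ that is modular in $\mathcal{P}_{\le x}$. $\mathcal{P}_{\ge a}=\{y\in\mathcal{P}:y\ge a\}$ with the induced order. *)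

(* Defs.v *)
From mathcomp Require Import all_boot all_order.
Set Implicit Arguments. Unset Strict Implicit. Unset Printing Implicit Defensive.
Import Order.Theory.
Local Open Scope order_scope.

Section PosetDefs.
Context {d : Order.disp_t} {T : finPOrderType d}.

Definition covers (x y : T) : bool :=
  (x < y) && [forall z, ~~ ((x < z) && (z < y))].

Definition is_rank_fun (rk : T -> nat) : Prop :=
  (forall x, [forall y, (y <= x) ==> (y == x)] -> rk x = 0) /\
  (forall x y, covers x y -> rk y = (rk x).+1).

Definition rank_of (rk : T -> nat) (S : {set T}) : nat := (\max_(x in S) rk x)%N.

Definition ub (S : {set T}) (y : T) : bool := [forall t in S, t <= y].
Definition mub (S : {set T}) : {set T} :=
  [set y | ub S y & [forall z, (ub S z && (z <= y)) ==> (z == y)]].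

Definition below (x : T) : {set T} := [set y | y <= x].

Definition is_lub (S : {set T}) (u v w : T) : bool :=
  [&& w \in S, u <= w, v <= w & [forall z in S, (u <= z) ==> (v <= z) ==> (w <= z)]].
Definition is_glb (S : {set T}) (u v w : T) : bool :=
  [&& w \in S, w <= u, w <= v & [forall z in S, (z <= u) ==> (z <= v) ==> (z <= w)]].

Definition lattice_below (x : T) : Prop :=
  forall u v, u <= x -> v <= x ->
    (exists w, is_lub (below x) u v w) /\ (exists w, is_glb (below x) u v w).

Definition geometric_below (rk : T -> nat) (x : T) : Prop :=
  lattice_below x /\
  forall u v, v <= x ->
    (covers u v <-> exists a, [/\ rk a = 1, a <= x, ~~ (a <= u) & is_lub (below x) u a v]).

Definition locally_geometric (rk : T -> nat) : Prop := forall x, geometric_below rk x.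

(* y is a modular element of the geometric lattice P_{<= x}:
   y /\ (z \/ w) = (y /\ z) \/ w for all w <= y and z in P_{<= x} *)
Definition modular_in (x y : T) : Prop :=
  y <= x /\
  forall z w, z <= x -> w <= y ->
  forall j m m' j',
    is_lub (below x) z w j -> is_glb (below x) y j m ->
    is_glb (below x) y z m' -> is_lub (below x) m' w j' -> m = j'.

Definition order_ideal (Q : {set T}) : Prop :=
  forall x y, y \in Q -> x <= y -> x \in Q.

Definition maximal_in (S : {set T}) (y : T) : bool :=
  (y \in S) && [forall z in S, (y <= z) ==> (z == y)].

Definition pure (rk : T -> nat) (Q : {set T}) : Prop :=
  forall y1 y2, maximal_in Q y1 -> maximal_in Q y2 -> rk y1 = rk y2.

Definition join_closed (Q : {set T}) : Prop :=
  forall S : {set T}, S \subset Q -> mub S \subset Q.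

Definition TM_ideal (rk : T -> nat) (Q : {set T}) : Prop :=
  [/\ order_ideal Q, pure rk Q, join_closed Q,
      (forall y a, y \in Q -> rk a = 1 -> a \notin Q -> #|mub [set a; y]| = 1) &
      (forall x, maximal_in [set: T] x -> exists y, maximal_in Q y /\ modular_in x y)].

End PosetDefs.

(* Main.v *)
Require Import Defs.
From mathcomp Require Import all_boot all_order zify.
Import Order.Theory.
Local Open Scope order_scope.
Set Implicit Arguments. Unset Strict Implicit.

Section S.
Context {d : Order.disp_t} {T : finPOrderType d}.
Implicit Types (x y z u v w t : T).

Lemma ex_minimal (P : pred T) s0 : P s0 ->
  exists2 s, P s & forall t, P t -> ~~ (t < s).
Proof.
move: {2}#|[set t | t < s0]| (leqnn #|[set t | t < s0]|) => n.
elim: n s0 => [|n IH] s0 Hn Ps0;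
  (case: (pickP [pred t | P t && (t < s0)]) => [t /andP[Pt lt] | none];
   [| by exists s0 => // t Pt; apply/negP => lt; move: (none t); rewrite /= Pt lt]).
- have : ([set t0 | t0 < t] \proper [set t0 | t0 < s0]).
    apply/properP; split.
      by apply/subsetP => q; rewrite !inE => h; apply: lt_trans h lt.
    by exists t; rewrite !inE ?lt ?ltxx.
  by move/proper_card; rewrite ltnNge (leq_trans Hn).
- apply: (IH t) => //.
  have : ([set t0 | t0 < t] \proper [set t0 | t0 < s0]).
    apply/properP; split.
      by apply/subsetP => q; rewrite !inE => h; apply: lt_trans h lt.
    by exists t; rewrite !inE ?lt ?ltxx.
  by move/proper_card => h; rewrite -ltnS (leq_trans h).
Qed.

Lemma ex_maximal (P : pred T) s0 : P s0 ->
  exists2 s, P s & s0 <= s /\ forall t, P t -> ~~ (s < t).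
Proof.
move: {2}#|[set t | s0 < t]| (leqnn #|[set t | s0 < t]|) => n.
elim: n s0 => [|n IH] s0 Hn Ps0;
  (case: (pickP [pred t | P t && (s0 < t)]) => [t /andP[Pt lt] | none];
   [| by exists s0 => //; split => // t Pt; apply/negP => lt; move: (none t); rewrite /= Pt lt]).
- have : ([set t0 | t < t0] \proper [set t0 | s0 < t0]).
    apply/properP; split.
      by apply/subsetP => q; rewrite !inE => h; apply: lt_trans lt h.
    by exists t; rewrite !inE ?lt ?ltxx.
  by move/proper_card; rewrite ltnNge (leq_trans Hn).
- have [|s Ps [le1 H]] := IH t _ Pt.
    have : ([set t0 | t < t0] \proper [set t0 | s0 < t0]).
      apply/properP; split.
        by apply/subsetP => q; rewrite !inE => h; apply: lt_trans lt h.
      by exists t; rewrite !inE ?lt ?ltxx.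
    by move/proper_card => h; rewrite -ltnS (leq_trans h).
  by exists s => //; split => //; apply: le_trans (ltW lt) le1.
Qed.

Definition jn x u v := odflt u [pick w | is_lub (below x) u v w].
Definition mt x u v := odflt u [pick w | is_glb (below x) u v w].

Lemma is_lubP x u v w : reflect
  [/\ w <= x, u <= w, v <= w & forall t, t <= x -> u <= t -> v <= t -> w <= t]
  (is_lub (below x) u v w).
Proof.
apply: (iffP and4P); rewrite inE.
  move=> [-> -> -> /forall_inP H]; split => // t tx ut vt.
  by move: (H t); rewrite inE => /(_ tx)/implyP/(_ ut)/implyP/(_ vt).
move=> [-> -> -> H]; split => //; apply/forall_inP => t; rewrite inE => tx.
by apply/implyP => ut; apply/implyP => vt; apply: H.
Qed.

Lemma is_glbP x u v w : reflect
  [/\ w <= x, w <= u, w <= v & forall t, t <= x -> t <= u -> t <= v -> t <= w]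
  (is_glb (below x) u v w).
Proof.
apply: (iffP and4P); rewrite inE.
  move=> [-> -> -> /forall_inP H]; split => // t tx ut vt.
  by move: (H t); rewrite inE => /(_ tx)/implyP/(_ ut)/implyP/(_ vt).
move=> [-> -> -> H]; split => //; apply/forall_inP => t; rewrite inE => tx.
by apply/implyP => ut; apply/implyP => vt; apply: H.
Qed.

Lemma lub_uniq x u v w1 w2 : is_lub (below x) u v w1 -> is_lub (below x) u v w2 -> w1 = w2.
Proof.
move=> /is_lubP[x1 u1 v1 H1] /is_lubP[x2 u2 v2 H2].
by apply/le_anti; rewrite H1 // H2.
Qed.

Lemma glb_uniq x u v w1 w2 : is_glb (below x) u v w1 -> is_glb (below x) u v w2 -> w1 = w2.
Proof.
move=> /is_glbP[x1 u1 v1 H1] /is_glbP[x2 u2 v2 H2].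
by apply/le_anti; rewrite H1 // H2.
Qed.

Lemma jnE x u v w : is_lub (below x) u v w -> jn x u v = w.
Proof.
move=> H; rewrite /jn; case: pickP => [w' H'|none]; first exact: lub_uniq H' H.
by move: (none w); rewrite H.
Qed.

Lemma mtE x u v w : is_glb (below x) u v w -> mt x u v = w.
Proof.
move=> H; rewrite /mt; case: pickP => [w' H'|none]; first exact: glb_uniq H' H.
by move: (none w); rewrite H.
Qed.

Lemma lub_mub x u v w : is_lub (below x) u v w -> w \in mub [set u; v].
Proof.
move=> /is_lubP[wx uw vw H]; rewrite inE; apply/andP; split.
  by apply/forall_inP => t; rewrite !inE => /orP[]/eqP->.
apply/forallP => z; apply/implyP => /andP[/forall_inP Hz zw].
have uz : u <= z by apply: Hz; rewrite !inE eqxx.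
have vz : v <= z by apply: Hz; rewrite !inE eqxx orbT.
by rewrite eq_le zw H // (le_trans zw wx).
Qed.

End S.

Section Main.
Context {d : Order.disp_t} {T : finPOrderType d}.
Variables (z0 : T) (rk : T -> nat) (Q : {set T}).
Hypotheses (Hz0 : forall x, z0 <= x) (Hrk : is_rank_fun rk)
  (LG : locally_geometric rk).
Implicit Types (x y z u v w t b : T).

Lemma rk0 : rk z0 = 0.
Proof. apply: Hrk.1; apply/forallP => y; apply/implyP => h; by rewrite eq_le h Hz0. Qed.

Lemma cover_rk u v : covers u v -> rk v = (rk u).+1.
Proof. exact: Hrk.2. Qed.

Lemma ex_cover_up u v : u < v -> exists2 t, covers u t & t <= v.
Proof.
move=> uv; have Pv : [pred t | (u < t) && (t <= v)] v by rewrite /= uv lexx.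
have [t /andP[ut tv] H] := ex_minimal Pv.
exists t => //; rewrite /covers ut; apply/forallP => z; apply/negP => /andP[uz zt].
by move: (H z); rewrite /= uz (le_trans (ltW zt) tv) zt => /(_ isT).
Qed.

Lemma ex_cover_down u v : u < v -> exists2 t, u <= t & covers t v.
Proof.
move=> uv; have Pu : [pred t | (u <= t) && (t < v)] u by rewrite /= uv lexx.
have [t /andP[ut tv] [_ H]] := ex_maximal Pu.
exists t => //; rewrite /covers tv; apply/forallP => z; apply/negP => /andP[tz zv].
by move: (H z); rewrite /= zv (le_trans ut (ltW tz)) tz => /(_ isT).
Qed.

Lemma rk_lt_aux (n : nat) u v : leq #|[set t | u < t & t <= v]| n -> u < v -> (rk u < rk v)%N.
Proof.
elim: n u => [|n IH] u Hn uv; have [s us sv] := ex_cover_up uv.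
all: case: (eqVneq s v) => [<-|nsv]; first by rewrite (cover_rk us).
all: have sv' : s < v by rewrite lt_neqAle nsv.
all: have pr : ([set t | s < t & t <= v] \proper [set t | u < t & t <= v]).
1,3: apply/properP; split;
     [ apply/subsetP => q; rewrite !inE => /andP[h ->]; rewrite andbT;
       by apply: lt_trans h; case/andP: us
     | by exists s; rewrite !inE ?ltxx ?sv //; case/andP: us => -> ].
- by move/proper_card: pr; rewrite ltnNge (leq_trans Hn).
- have h : (rk s < rk v)%N.
    apply: (IH s) => //.
    by move/proper_card: pr => h; rewrite -ltnS (leq_trans h).
  rewrite (cover_rk us) in h; exact: ltnW h.
Qed.

Lemma rk_lt u v : u < v -> (rk u < rk v)%N.
Proof. exact: rk_lt_aux. Qed.

Lemma rk_le u v : u <= v -> (rk u <= rk v)%N.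
Proof. by rewrite le_eqVlt => /orP[/eqP->//|/rk_lt/ltnW]. Qed.

Lemma rk_eq u v : u <= v -> rk u = rk v -> u = v.
Proof.
rewrite le_eqVlt => /orP[/eqP->//|/rk_lt h e]; by rewrite e ltnn in h.
Qed.

Lemma below_atom b t : rk b = 1 -> t < b -> t = z0.
Proof.
move=> rb tb; case: (eqVneq z0 t) => [//|nt].
have : z0 < t by rewrite lt_neqAle nt Hz0.
move/rk_lt; rewrite rk0 => h; move: (rk_lt tb); rewrite rb.
by case: (rk t) h.
Qed.

Lemma atom_eq b c : rk b = 1 -> rk c = 1 -> b <= c -> b = c.
Proof. by move=> rb rc bc; apply: rk_eq => //; rewrite rb rc. Qed.

Lemma jnP x u v : u <= x -> v <= x -> is_lub (below x) u v (jn x u v).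
Proof.
move=> ux vx; have [[w H] _] := (LG x).1 u v ux vx.
by rewrite (jnE H).
Qed.

Lemma mtP x u v : u <= x -> v <= x -> is_glb (below x) u v (mt x u v).
Proof.
move=> ux vx; have [_ [w H]] := (LG x).1 u v ux vx.
by rewrite (mtE H).
Qed.

Lemma lub_atom_rk x u b v : rk b = 1 -> b <= x -> ~~ (b <= u) ->
  is_lub (below x) u b v -> rk v = (rk u).+1.
Proof.
move=> rb bx bu H; have vx : v <= x by case/is_lubP: H.
apply: cover_rk; apply/((LG x).2 u v vx); by exists b.
Qed.

Lemma geo_cover x u v : covers u v -> v <= x ->
  exists b, [/\ rk b = 1, b <= x, ~~ (b <= u) & is_lub (below x) u b v].
Proof. move=> c vx; exact/((LG x).2 u v vx). Qed.

Lemma ex_max_above z : exists2 x, maximal_in [set: T] x & z <= x.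
Proof.
have Pz : (predT : pred T) z by [].
have [s _ [zs H]] := ex_maximal Pz.
exists s => //; rewrite /maximal_in in_setT; apply/forall_inP => t _.
apply/implyP => st; rewrite eq_le st andbT; apply/negPn/negP => ts.
by move: (H t isT); rewrite lt_neqAle st andbT; case: eqVneq ts => // ->; rewrite lexx.
Qed.


Lemma jn_le x u v t : u <= x -> v <= x -> t <= x -> u <= t -> v <= t -> jn x u v <= t.
Proof. by move=> ux vx tx ut vt; case/is_lubP: (jnP ux vx) => _ _ _ H; apply: H. Qed.
Lemma jn_gel x u v : u <= x -> v <= x -> u <= jn x u v.
Proof. by move=> ux vx; case/is_lubP: (jnP ux vx). Qed.
Lemma jn_ger x u v : u <= x -> v <= x -> v <= jn x u v.
Proof. by move=> ux vx; case/is_lubP: (jnP ux vx). Qed.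
Lemma jn_x x u v : u <= x -> v <= x -> jn x u v <= x.
Proof. by move=> ux vx; case/is_lubP: (jnP ux vx). Qed.
Lemma mt_ge x u v t : u <= x -> v <= x -> t <= x -> t <= u -> t <= v -> t <= mt x u v.
Proof. by move=> ux vx tx ut vt; case/is_glbP: (mtP ux vx) => _ _ _ H; apply: H. Qed.
Lemma mt_lel x u v : u <= x -> v <= x -> mt x u v <= u.
Proof. by move=> ux vx; case/is_glbP: (mtP ux vx). Qed.
Lemma mt_ler x u v : u <= x -> v <= x -> mt x u v <= v.
Proof. by move=> ux vx; case/is_glbP: (mtP ux vx). Qed.
Lemma jn_z0 x t : t <= x -> jn x z0 t = t.
Proof. move=> tx; apply: jnE; apply/is_lubP; split => //. Qed.
Lemma jn_z0r x t : t <= x -> jn x t z0 = t.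
Proof. move=> tx; apply: jnE; apply/is_lubP; split => //. Qed.

Hypotheses (TM : TM_ideal rk Q) (HrQ : rank_of rk Q = rank_of rk [set: T] - 1).
Variable a : T.
Hypotheses (Ha1 : rk a = 1) (HaQ : a \notin Q).

Lemma Qideal : order_ideal Q.
Proof. by case: TM. Qed.
Lemma Qjoin : Defs.join_closed Q.
Proof. by case: TM. Qed.

Lemma z0Q : z0 \in Q.
Proof.
have /subsetP := Qjoin (sub0set Q); apply; rewrite inE; apply/andP; split.
  by apply/forall_inP => t; rewrite inE.
by apply/forallP => z; apply/implyP => /andP[_ h]; rewrite eq_le h Hz0.
Qed.

Lemma rk_le_top x : (rk x <= rank_of rk [set: T])%N.
Proof. by rewrite /rank_of; apply: leq_bigmax_cond; rewrite in_setT. Qed.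

Lemma rkQ y : maximal_in Q y -> rk y = rank_of rk Q.
Proof.
move=> my.
have Q0 : (0 < #|Q|)%N by apply/card_gt0P; exists z0; exact: z0Q.
have [q qQ eq] := eq_bigmax_cond rk Q0.
have Pq : [pred t | t \in Q] q by [].
have [s /= sQ [qs H]] := ex_maximal Pq.
have ms : maximal_in Q s.
  rewrite /maximal_in sQ; apply/forall_inP => t tQ; apply/implyP => st.
  rewrite eq_le st andbT; apply/negPn/negP => ts.
  by move: (H t tQ); rewrite lt_neqAle st andbT; case: eqVneq ts => // ->; rewrite lexx.
case: TM => _ pu _ _ _; rewrite (pu y s my ms) /rank_of eq.
apply/eqP; rewrite eqn_leq (rk_le qs) andbT.
by rewrite -eq; apply: leq_bigmax_cond.
Qed.

Definition f y := odflt z0 [pick w in mub [set a; y]].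

Lemma f_mub y : y \in Q -> mub [set a; y] = [set f y].
Proof.
move=> yQ; case: TM => _ _ _ H1 _.
have /cards1P [w E] : #|mub [set a; y]| == 1 by rewrite H1.
rewrite /f E; case: pickP => [w' | none]; first by rewrite inE => /eqP->.
by move: (none w); rewrite !inE eqxx.
Qed.

Lemma fE x y w : y \in Q -> is_lub (below x) a y w -> f y = w.
Proof.
move=> yQ /lub_mub; rewrite f_mub // inE => /eqP -> //.
Qed.

Lemma f_ub y : y \in Q -> a <= f y /\ y <= f y.
Proof.
move=> yQ; have : f y \in mub [set a; y] by rewrite f_mub // inE.
rewrite inE => /andP[/forall_inP H _]; split; apply: H; by rewrite !inE eqxx ?orbT.
Qed.

Lemma le_max_Q x y t : maximal_in Q y -> y <= x -> t \in Q -> t <= x -> t <= y.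
Proof.
move=> /andP[yQ /forall_inP my] yx tQ tx.
have vQ : jn x t y \in Q.
  have sub : [set t; y] \subset Q by apply/subsetP => q; rewrite !inE => /orP[]/eqP->.
  have /subsetP := Qjoin sub; apply; exact/lub_mub/jnP.
have /implyP := my _ vQ; rewrite jn_ger // => /(_ isT) /eqP <-.
exact: jn_gel.
Qed.

Lemma mt_a x y : y \in Q -> y <= x -> a <= x -> mt x y a = z0.
Proof.
move=> yQ yx ax; apply: (below_atom Ha1).
rewrite lt_neqAle mt_ler // andbT; apply/negP => /eqP e.
have : a <= y by rewrite -e mt_lel.
by move/(Qideal yQ); rewrite (negbTE HaQ).
Qed.

Lemma mod_id x y t : maximal_in Q y -> modular_in x y -> a <= x -> t <= y ->
  mt x y (jn x a t) = t.
Proof.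
move=> my [yx H] ax ty; have tx := le_trans ty yx.
have yQ : y \in Q by case/andP: my.
have := H a t ax ty _ _ _ _ (jnP ax tx) (mtP yx (jn_x ax tx)) (mtP yx ax)
  (jnP (le_trans (mt_lel yx ax) yx) tx).
by rewrite mt_a // jn_z0.
Qed.


Lemma f_order y1 y2 : y1 \in Q -> y2 \in Q -> (f y1 <= f y2) = (y1 <= y2).
Proof.
move=> y1Q y2Q; have [x mx fx] := ex_max_above (f y2).
case: TM => _ _ _ _ H2; have [y [my mody]] := H2 x mx.
have [af2 y2f] := f_ub y2Q; have [af1 y1f] := f_ub y1Q.
have ax := le_trans af2 fx; have y2x := le_trans y2f fx.
have yx : y <= x by case: mody.
apply/idP/idP => [le12 | le12].
- have y1x : y1 <= x by apply: le_trans y1f (le_trans le12 fx).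
  have y1y := le_max_Q my yx y1Q y1x; have y2y := le_max_Q my yx y2Q y2x.
  rewrite -(mod_id my mody ax y1y) -(mod_id my mody ax y2y).
  have e1 := fE y1Q (jnP ax y1x); have e2 := fE y2Q (jnP ax y2x).
  apply: mt_ge.
  + exact: yx.
  + exact: jn_x.
  + exact: le_trans (mt_lel yx (jn_x ax y1x)) yx.
  + exact: (mt_lel yx (jn_x ax y1x)).
  + apply: le_trans (mt_ler yx (jn_x ax y1x)) _; by rewrite -e1 -e2.
- have y1x : y1 <= x by apply: le_trans le12 y2x.
  rewrite (fE y1Q (jnP ax y1x)); apply: jn_le => //.
  exact: le_trans le12 y2f.
Qed.

Section Coatom.
Variables (x y : T).
Hypotheses (my : maximal_in Q y) (mody : modular_in x y) (ax : a <= x).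

Lemma yx : y <= x. Proof. by case: mody. Qed.
Lemma yQ : y \in Q. Proof. by case/andP: my. Qed.
Lemma ay : ~~ (a <= y).
Proof. by apply/negP => /(Qideal yQ); rewrite (negbTE HaQ). Qed.

Lemma rk_x : rk x = (rk y).+1.
Proof.
have ltyx : y < x by rewrite lt_neqAle yx andbT; apply/negP => /eqP e; move: ay; rewrite e ax.
have := rk_lt ltyx; have := rk_le_top x; have := rkQ my; rewrite HrQ; lia.
Qed.

Lemma coatom b : b <= x -> ~~ (b <= y) -> jn x b y = x.
Proof.
move=> bx by_; set v := jn x b y.
have yv : y <= v by apply: jn_ger => //; exact: yx.
have vx : v <= x by apply: jn_x => //; exact: yx.
have ltyv : y < v.
  rewrite lt_neqAle yv andbT; apply/negP => /eqP e; move: by_.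
  by rewrite e jn_gel //; exact: yx.
apply: rk_eq => //; have := rk_lt ltyv; have := rk_le vx; rewrite rk_x; lia.
Qed.

Lemma line b : rk b = 1 -> b <= x -> ~~ (b <= y) -> b != a ->
  b <= jn x a (mt x y (jn x a b)).
Proof.
move=> rb bx by_ nba.
have yx' := yx.
set l := jn x a b; set c := mt x y l.
have lx : l <= x by exact: jn_x.
have cy : c <= y by exact: mt_lel.
have cl : c <= l by exact: mt_ler.
have cx : c <= x by exact: le_trans cy yx'.
have cz : c != z0.
  apply/eqP => cz0.
  have PW : [pred w | (w <= y) && (a <= jn x b w)] y.
    by rewrite /= lexx coatom.
  have [w /= /andP[wy awb] Hmin] := ex_minimal PW.
  have wx : w <= x by exact: le_trans wy yx'.
  have wz : w != z0.
    apply/eqP => e; move: awb; rewrite e jn_z0r // => ab.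
    by move: nba; rewrite (atom_eq Ha1 rb ab) eqxx.
  have zw : z0 < w by rewrite lt_neqAle eq_sym wz Hz0.
  have [w' _ cw] := ex_cover_down zw.
  have w'w : w' < w by case/andP: cw.
  have w'x : w' <= x by exact: le_trans (ltW w'w) wx.
  have w'y : w' <= y by exact: le_trans (ltW w'w) wy.
  have [e [re ex ew' Hw]] := geo_cover cw wx.
  have naw' : ~~ (a <= jn x b w').
    by apply/negP => h; move: (Hmin w'); rewrite /= w'y h w'w => /(_ isT).
  set p := jn x b w'; set q := jn x b w.
  have px : p <= x by exact: jn_x.
  have qx : q <= x by exact: jn_x.
  set r := jn x p a.
  have rr : rk r = (rk p).+1 by apply: (lub_atom_rk Ha1 ax naw'); exact: jnP.
  have pq : p <= q.
    apply: jn_le => //; first exact: jn_gel.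
    exact: le_trans (ltW w'w) (jn_ger bx wx).
  have rq : r <= q by apply: jn_le.
  set s := jn x p e.
  have sx : s <= x by exact: jn_x.
  have qs : q <= s.
    apply: jn_le => //; first exact: le_trans (jn_gel bx w'x) (jn_gel px ex).
    case/is_lubP: Hw => _ _ _ Hw; apply: Hw => //.
      exact: le_trans (jn_ger bx w'x) (jn_gel px ex).
    exact: jn_ger.
  have rs : (rk s <= (rk p).+1)%N.
    case: (boolP (e <= p)) => ep.
      have : s <= p by apply: jn_le.
      by move/rk_le => h; apply: leq_trans h _.
    by rewrite (lub_atom_rk re ex ep (jnP px ex)).
  have req : r = q.
    apply: rk_eq => //; apply/eqP; rewrite eqn_leq (rk_le rq) /=.
    by rewrite rr; apply: leq_trans (rk_le qs) rs.
  case: mody => _ H.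
  have := H l w' lx w'y _ _ _ _ (jnP lx w'x) (mtP yx' (jn_x lx w'x)) (mtP yx' lx)
    (jnP (le_trans (mt_lel yx' lx) yx') w'x).
  rewrite -/c cz0 jn_z0 // => E.
  have wj : w <= jn x l w'.
    apply: le_trans (_ : q <= _); first exact: jn_ger.
    rewrite -req; apply: jn_le => //; first exact: jn_x.
      apply: jn_le => //; first exact: jn_x.
        exact: le_trans (jn_ger ax bx) (jn_gel lx w'x).
      exact: jn_ger.
    exact: le_trans (jn_gel ax bx) (jn_gel lx w'x).
  have : w <= w'.
    rewrite -E; apply: mt_ge => //; exact: jn_x.
  by move/(lt_le_trans w'w); rewrite ltxx.
have nca : ~~ (c <= a).
  apply/negP => ca; case: (eqVneq c a) => [e|nca].
    by move: ay; rewrite -e cy.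
  by move: cz; rewrite (below_atom Ha1 (_ : c < a)) ?eqxx // lt_neqAle nca ca.
have nba' : ~~ (b <= a).
  by apply/negP => ba; move: nba; rewrite (atom_eq rb Ha1 ba) eqxx.
have acl : jn x a c <= l by apply: jn_le => //; exact: jn_gel.
have jac : jn x a c = l.
  apply: rk_eq => //.
  have al : a < jn x a c.
    rewrite lt_neqAle jn_gel // andbT; apply/negP => /eqP e.
    by move: nca; rewrite e jn_ger.
  have h1 := rk_lt al; have h2 := rk_le acl.
  move: h1 h2; rewrite (lub_atom_rk rb bx nba' (jnP ax bx)) => h1 h2.
  by apply/eqP; rewrite eqn_leq h2.
by rewrite jac; exact: jn_ger.
Qed.

End Coatom.

Lemma f_surj z : a <= z -> exists2 y, y \in Q & f y = z.
Proof.
move=> az; have [x mx zx] := ex_max_above z.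
case: TM => _ _ _ _ H2; have [y [my mody]] := H2 x mx.
have ax := le_trans az zx; have yx' := yx mody.
set m := mt x y z.
have my' : m <= y by exact: mt_lel.
have mz : m <= z by exact: mt_ler.
have mx' : m <= x := le_trans my' yx'.
have mQ : m \in Q := Qideal (yQ my) my'.
exists m => //; rewrite (fE mQ (jnP ax (le_trans my' yx'))).
set j := jn x a m.
have jz : j <= z by apply: jn_le.
have jx : j <= x by exact: le_trans jz zx.
apply/eqP; rewrite eq_le jz /=; apply/negP => nzj.
have ltjz : j < z by rewrite lt_neqAle jz andbT; apply/negP => /eqP e; move: nzj; rewrite e lexx.
have [j' cj j'z] := ex_cover_up ltjz.
have [b [rb bx bj Hb]] := geo_cover cj (le_trans j'z zx).
have bz : b <= z by case/is_lubP: Hb => _ _ bj' _; exact: le_trans bj' j'z.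
have aj : a <= j by exact: jn_gel.
have nba : b != a by apply/eqP => e; move: bj; rewrite e aj.
have nby : ~~ (b <= y).
  apply/negP => by_; move: bj; rewrite (le_trans (_ : b <= m)) //.
    by apply: mt_ge.
  exact: jn_ger.
have := line my mody ax rb bx nby nba.
set c := mt x y (jn x a b).
have abx : jn x a b <= x := jn_x ax bx.
have cy : c <= y := mt_lel yx' abx.
have cab : c <= jn x a b := mt_ler yx' abx.
have cx : c <= x := le_trans cy yx'.
have abz : jn x a b <= z := jn_le ax bx zx az bz.
have cm : c <= m := mt_ge yx' zx cx cy (le_trans cab abz).
have cj' : jn x a c <= j := jn_le ax cx jx aj (le_trans cm (jn_ger ax mx')).
by move=> h; move: bj; rewrite (le_trans h cj').
Qed.

End Main.

Unset Implicit Arguments.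

Theorem lemma4p4 (d : Order.disp_t) (T : finPOrderType d) (z0 : T)
  (rk : T -> nat) (Q : {set T}) :
  (forall x, z0 <= x) ->
  is_rank_fun rk ->
  locally_geometric rk ->
  TM_ideal rk Q ->
  rank_of rk Q = rank_of rk [set: T] - 1 ->
  forall a : T, rk a = 1 -> a \notin Q ->
  exists f : T -> T,
    [/\ {in Q, forall y, a <= f y},
        (forall z, a <= z -> exists2 y, y \in Q & f y = z) &
        {in Q &, forall y1 y2, (f y1 <= f y2) = (y1 <= y2)}].
Proof.
move=> Hz0 Hrk LG TM HrQ a Ha1 HaQ.
exists (f z0 a); split.
- by move=> y yQ; case: (f_ub z0 TM Ha1 HaQ yQ).
- exact: (f_surj Hz0 Hrk LG TM HrQ Ha1 HaQ).
- by move=> y1 y2 y1Q y2Q; exact: (f_order Hz0 Hrk LG TM Ha1 HaQ).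
Qed.
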